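(* Let $0<e<\Lambda$, $\phi_h>0$, $f:[0,\phi_h]\to(0,1]$ strictly concave, strictly decreasing, differentiable with $f(0)=1$. Consider the two-player game with action sets $[0,\phi_h]$ and payoffs $\tilde{\mathcal M}_i(\phi_i,\phi_{-i})$ given by: - if $\phi_i=\phi_{-i}$: $e\phi_i$ if $\phi_i<\underline\phi$, and $\frac{\Lambda}{2}f(\phi_i)\phi_i$ if $\phi_i\ge\underline\phi$; - if $\phi_i<\phi_{-i}$: $e\phi_i$ if $\phi_{-i}<\bar\phi$, and $\min\{\Lambda f(\phi_i),e\}\phi_i$ if $\phi_{-i}\ge\bar\phi$; - if $\phi_i>\phi_{-i}$: $e\phi_i$ if $\phi_i<\underline\phi$, $m(\phi_i)$ if $\phi_i\in[\underline\phi,\bar\phi)$, and $0$ if $\phi_i\ge\bar\phi$. Let $\phi^*_m$ be the unique maximizer of $m(\phi)=(\Lambda f(\phi)-e)\phi$ over $[0,\phi_h]$, and set $\phi_U^*=\phi^*_m$, $\phi_L^*=m(\phi^*_m)/e=\bigl(\frac{\Lambda f(\phi^*_m)}{e}-1\bigr)\phi^*_m$. If $\underline\phi<\phi^*_m\le\min\{\phi_h,\bar\phi\}$, then $[\phi_L^*,\phi_U^*]$ is an equilibrium cycle.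
   Context: These payoffs are the limiting (driver abandonment rate $\beta\to0$) long-run revenue rates of two symmetric ride-hailing platforms using static prices, when passengers (total Poisson rate $\Lambda$) split across platforms by a Wardrop equilibrium equalizing the probability of not obtaining a ride; $e$ is the effective driver arrival rate per platform and $f(\phi)$ the probability a passenger accepts price $\phi$. Thresholds: $\underline{\phi}:=\inf\{\phi\in[0,\phi_h]: f(\phi)\le 2e/\Lambda\}$, $\bar\phi:=\inf\{\phi\in[0,\phi_h]: f(\phi)\le e/\Lambda\}$, $\inf\emptyset=+\infty$ (so they equal $f^{-1}(2e/\Lambda)$, $f^{-1}(e/\Lambda)$ when in range and $0$ when $2e/\Lambda>1$, resp. $e/\Lambda>1$). Equilibrium cycle: a closed interval $[a,b]\subseteq[0,\phi_h]$ such that (i) for every player $i$, every $\phi_{-i}\in[a,b]$ and every $\phi_i\in[0,\phi_h]\setminus[a,b]$ there is $\phi_i'\in[a,b]$ with $\tilde{\mathcal M}_i(\phi_i',\phi_{-i})>\tilde{\mathcal M}_i(\phi_i,\phi_{-i})$; and (ii) for every $(\phi_1,\phi_2)\in[a,b]^2$ there exist a player $i$ and $\phi_i'\in[a,b]$ with $\tilde{\mathcal M}_i(\phi_i',\phi_{-i})>\tilde{\mathcal M}_i(\phi_i,\phi_{-i})$. *)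

(* Defs.v *)
From Stdlib Require Import Reals.
From Coquelicot Require Import Coquelicot.
Open Scope R_scope.

Definition in_I (ph x : R) : Prop := 0 <= x <= ph.

Definition strictly_concave_on (ph : R) (f : R -> R) : Prop :=
  forall x y t, in_I ph x -> in_I ph y -> x <> y -> 0 < t < 1 ->
    t * f x + (1 - t) * f y < f (t * x + (1 - t) * y).

Definition strictly_decreasing_on (ph : R) (f : R -> R) : Prop :=
  forall x y, in_I ph x -> in_I ph y -> x < y -> f y < f x.

(* thresholds: inf { phi in [0,ph] | f phi <= c }, with inf of the empty set = +oo
   (Glb_Rbar of the empty set is p_infty) *)
Definition thr (ph : R) (f : R -> R) (c : R) : Rbar :=
  Glb_Rbar (fun p => in_I ph p /\ f p <= c).

Definition phi_low (e Lam ph : R) (f : R -> R) : Rbar := thr ph f (2 * e / Lam).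
Definition phi_bar (e Lam ph : R) (f : R -> R) : Rbar := thr ph f (e / Lam).

Definition mfun (e Lam : R) (f : R -> R) (p : R) : R := (Lam * f p - e) * p.

Definition payoff (e Lam ph : R) (f : R -> R) (x y : R) : R :=
  match total_order_T x y with
  | inleft (right _) =>
      if Rbar_lt_dec (Finite x) (phi_low e Lam ph f) then e * x
      else Lam / 2 * f x * x
  | inleft (left _) =>
      if Rbar_lt_dec (Finite y) (phi_bar e Lam ph f) then e * x
      else Rmin (Lam * f x) e * x
  | inright _ =>
      if Rbar_lt_dec (Finite x) (phi_low e Lam ph f) then e * x
      else if Rbar_lt_dec (Finite x) (phi_bar e Lam ph f) then mfun e Lam f x
      else 0
  end.

(* Equilibrium cycle of a two-player game with action sets [0,ph];
   M1 x y = payoff of player 1 playing x against y, M2 x y = payoff of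
   player 2 playing x against player 1 playing y. *)
Definition equilibrium_cycle (ph : R) (M1 M2 : R -> R -> R) (a b : R) : Prop :=
  0 <= a /\ a <= b /\ b <= ph /\
  (forall y x, a <= y <= b -> in_I ph x -> ~ (a <= x <= b) ->
      exists x', a <= x' <= b /\ M1 x y < M1 x' y) /\
  (forall y x, a <= y <= b -> in_I ph x -> ~ (a <= x <= b) ->
      exists x', a <= x' <= b /\ M2 x y < M2 x' y) /\
  (forall p1 p2, a <= p1 <= b -> a <= p2 <= b ->
      (exists x', a <= x' <= b /\ M1 p1 p2 < M1 x' p2) \/
      (exists x', a <= x' <= b /\ M2 p2 p1 < M2 x' p1)).

(* Main.v *)
Require Import Defs.
From Stdlib Require Import Reals Lra Classical.
From Coquelicot Require Import Coquelicot.
Open Scope R_scope.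

Lemma cont_at (f : R -> R) x : ex_derive f x ->
  forall eps, 0 < eps -> exists d, 0 < d /\ forall p, Rabs (p - x) < d -> Rabs (f p - f x) < eps.
Proof.
  intros Hd eps He.
  assert (Hc : continuity_pt f x).
  { apply continuity_pt_filterlim. apply (ex_derive_continuous f x Hd). }
  destruct (Hc eps He) as [d [Hd0 Hd1]].
  exists d; split; [lra|]. intros p Hp.
  destruct (Req_dec p x) as [->|Hne].
  - rewrite Rminus_eq_0, Rabs_R0; lra.
  - apply (Hd1 p). split; [split; [exact I| congruence] | exact Hp].
Qed.

Lemma thr_lb ph f c p : in_I ph p -> f p <= c -> Rbar_le (thr ph f c) (Finite p).
Proof.
  intros Hp Hf. destruct (Glb_Rbar_correct (fun p => in_I ph p /\ f p <= c)) as [H1 _].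
  apply H1. auto.
Qed.

Lemma thr_ge0 ph f c : Rbar_le (Finite 0) (thr ph f c).
Proof.
  destruct (Glb_Rbar_correct (fun p => in_I ph p /\ f p <= c)) as [_ H2].
  apply H2. intros x [[Hx _] _]. simpl. lra.
Qed.

Lemma thr_above ph f c p : in_I ph p -> Rbar_lt (Finite p) (thr ph f c) -> c < f p.
Proof.
  intros Hp Hl. destruct (Rlt_le_dec c (f p)) as [h|h]; auto.
  exfalso. apply (Rbar_lt_not_le _ _ Hl). apply thr_lb; auto.
Qed.

Lemma thr_below ph f c p : strictly_decreasing_on ph f -> in_I ph p ->
  Rbar_lt (thr ph f c) (Finite p) -> f p < c.
Proof.
  intros Hdec Hp Hl.
  destruct (classic (exists r, (in_I ph r /\ f r <= c) /\ r < p)) as [[r [[Hr Hfr] Hrp]]|Hn].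
  - specialize (Hdec r p Hr Hp Hrp). lra.
  - exfalso. destruct (Glb_Rbar_correct (fun p => in_I ph p /\ f p <= c)) as [_ H2].
    assert (Hb : Rbar_le (Finite p) (thr ph f c)).
    { apply H2. intros x Hx. simpl. destruct (Rlt_le_dec x p) as [h|h]; auto.
      exfalso; apply Hn; eauto. }
    exact (Rbar_lt_not_le _ _ Hl Hb).
Qed.

Section P.
Variables (e Lam ph : R) (f : R -> R).

Lemma pay_lt_eq x y : x < y -> Rbar_lt (Finite y) (phi_bar e Lam ph f) ->
  payoff e Lam ph f x y = e * x.
Proof.
  intros H Hb. unfold payoff. destruct (total_order_T x y) as [[h|h]|h]; try lra.
  destruct (Rbar_lt_dec y (phi_bar e Lam ph f)); tauto.
Qed.

Lemma pay_lt_le x y : 0 < e -> 0 <= x -> x < y -> payoff e Lam ph f x y <= e * x.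
Proof.
  intros He Hx H. unfold payoff. destruct (total_order_T x y) as [[h|h]|h]; try lra.
  destruct (Rbar_lt_dec y (phi_bar e Lam ph f)); try lra.
  apply Rmult_le_compat_r; auto. apply Rmin_r.
Qed.

Lemma pay_gt x y : y < x -> ~ Rbar_lt (Finite x) (phi_low e Lam ph f) ->
  payoff e Lam ph f x y = mfun e Lam f x \/ payoff e Lam ph f x y = 0 /\ ~ Rbar_lt (Finite x) (phi_bar e Lam ph f).
Proof.
  intros H Hl. unfold payoff. destruct (total_order_T x y) as [[h|h]|h]; try lra.
  destruct (Rbar_lt_dec x (phi_low e Lam ph f)); try tauto.
  destruct (Rbar_lt_dec x (phi_bar e Lam ph f)); tauto.
Qed.

Lemma pay_eq x : ~ Rbar_lt (Finite x) (phi_low e Lam ph f) ->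
  payoff e Lam ph f x x = Lam / 2 * f x * x.
Proof.
  intros Hl. unfold payoff. destruct (total_order_T x x) as [[h|h]|h]; try lra.
  destruct (Rbar_lt_dec x (phi_low e Lam ph f)); tauto.
Qed.
End P.

Theorem theorem5 (e Lam ph : R) (f : R -> R) (phim : R) :
  0 < e -> e < Lam -> 0 < ph ->
  (forall x, in_I ph x -> 0 < f x <= 1) ->
  strictly_concave_on ph f ->
  strictly_decreasing_on ph f ->
  (forall x, in_I ph x -> ex_derive f x) ->
  f 0 = 1 ->
  (* phim is the unique maximizer of m over [0, ph] *)
  in_I ph phim ->
  (forall p, in_I ph p -> p <> phim -> mfun e Lam f p < mfun e Lam f phim) ->
  Rbar_lt (phi_low e Lam ph f) (Finite phim) ->
  phim <= ph ->
  Rbar_le (Finite phim) (phi_bar e Lam ph f) ->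
  equilibrium_cycle ph (payoff e Lam ph f) (payoff e Lam ph f)
    (mfun e Lam f phim / e) phim.
Proof.
  intros He HeL Hph Hfr _ Hdec Hder Hf0 Hpm Hmax Hlow _ _.
  assert (Hpm' := Hpm). destruct Hpm' as [Hpm1 Hpm2].
  set (L := mfun e Lam f phim / e).
  assert (HL : e * L = mfun e Lam f phim) by (unfold L; field; lra).
  assert (Hl0 := thr_ge0 ph f (2 * e / Lam)).
  fold (phi_low e Lam ph f) in Hl0.
  destruct (phi_low e Lam ph f) as [q| |] eqn:Eq; simpl in Hlow, Hl0; try contradiction.
  assert (Hp0 : 0 < phim) by lra.
  assert (Hm0 : mfun e Lam f 0 = 0) by (unfold mfun; ring).
  assert (Hmp : 0 < mfun e Lam f phim).
  { rewrite <- Hm0. apply Hmax; [split; lra | lra]. }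
  assert (HLp : 0 < L) by (unfold L; apply Rdiv_lt_0_compat; lra).
  assert (Hfp : e < Lam * f phim).
  { unfold mfun in Hmp. destruct (Rlt_le_dec e (Lam * f phim)); auto.
    assert ((Lam * f phim - e) * phim <= 0).
    { apply Rmult_le_0_r; lra. } lra. }
  assert (Hbar : Rbar_lt (Finite phim) (phi_bar e Lam ph f)).
  { destruct (cont_at f phim (Hder phim Hpm) (f phim - e / Lam)) as [d [Hd Hd1]].
    { apply Rlt_0_minus. apply (Rmult_lt_reg_l Lam); [lra|]. field_simplify; lra. }
    assert (Hle : Rbar_le (Finite (phim + d)) (phi_bar e Lam ph f)).
    { destruct (Glb_Rbar_correct (fun p => in_I ph p /\ f p <= e / Lam)) as [_ H2].
      apply H2. intros x [Hx Hfx]. simpl.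
      destruct (Rlt_le_dec x (phim + d)) as [h|h]; [|lra]. exfalso.
      destruct (Rle_lt_dec x phim) as [h2|h2].
      - assert (f phim <= f x).
        { destruct (Req_dec x phim) as [->|hn]; [lra|].
          left; apply Hdec; auto; lra. }
        assert (e / Lam < f phim).
        { apply (Rmult_lt_reg_l Lam); [lra|]. field_simplify; lra. }
        lra.
      - assert (Habs : Rabs (x - phim) < d) by (rewrite Rabs_right; lra).
        specialize (Hd1 x Habs). apply Rabs_def2 in Hd1. lra. }
    destruct (phi_bar e Lam ph f); simpl in *; auto; lra. }
  assert (Hfp2 : f phim < 2 * e / Lam).
  { apply (thr_below ph f); auto. unfold phi_low in Eq. rewrite Eq. simpl. lra. }
  assert (HLU : L < phim).
  { apply (Rmult_lt_reg_l e); auto. rewrite HL. unfold mfun.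
    assert (Lam * f phim < 2 * e).
    { apply (Rmult_lt_reg_l (/ Lam)). apply Rinv_0_lt_compat; lra.
      replace (/ Lam * (Lam * f phim)) with (f phim) by (field; lra).
      replace (/ Lam * (2 * e)) with (2 * e / Lam) by (field; lra). lra. }
    assert (Hq2 : (Lam * f phim - e) * phim < e * phim).
    { apply Rmult_lt_compat_r; lra. }
    exact Hq2. }
  assert (HqL : q < L).
  { destruct (Rlt_le_dec q L) as [h|h]; auto. exfalso.
    assert (Hq : in_I ph q) by (split; lra).
    assert (Hfq : 2 * e / Lam <= f q).
    { destruct (Rlt_le_dec (f q) (2 * e / Lam)) as [h2|h2]; auto. exfalso.
      destruct (cont_at f q (Hder q Hq) (2 * e / Lam - f q)) as [d [Hd Hd1]]; [lra|].
      set (p := Rmax 0 (q - d / 2)).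
      assert (Hp1 : 0 <= p) by apply Rmax_l.
      assert (Hp2 : p < q) by (unfold p; apply Rmax_lub_lt; lra).
      assert (Hp3 : q - d / 2 <= p) by apply Rmax_r.
      assert (Habs : Rabs (p - q) < d) by (rewrite Rabs_left; lra).
      specialize (Hd1 p Habs). apply Rabs_def2 in Hd1.
      assert (Hb := thr_lb ph f (2 * e / Lam) p ltac:(split; lra) ltac:(lra)).
      fold (phi_low e Lam ph f) in Hb. rewrite Eq in Hb. simpl in Hb. lra. }
    assert (Hmq : e * q <= mfun e Lam f q).
    { unfold mfun. assert (2 * e <= Lam * f q).
      { apply (Rmult_le_reg_l (/ Lam)). apply Rinv_0_lt_compat; lra.
        replace (/ Lam * (Lam * f q)) with (f q) by (field; lra).
        replace (/ Lam * (2 * e)) with (2 * e / Lam) by (field; lra). lra. }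
      nra. }
    assert (Hlt := Hmax q Hq ltac:(lra)). nra. }
  assert (Hnl : forall p, L <= p -> ~ Rbar_lt (Finite p) (phi_low e Lam ph f)).
  { intros p Hp. rewrite Eq. simpl. lra. }
  assert (Hbl : forall p, p <= phim -> Rbar_lt (Finite p) (phi_bar e Lam ph f)).
  { intros p Hp. destruct (phi_bar e Lam ph f); simpl in *; auto; lra. }
  assert (Hdev : forall y, L <= y <= phim -> exists x', L <= x' <= phim /\
            payoff e Lam ph f x' y = e * L).
  { intros y Hy. destruct (Rlt_le_dec y phim) as [h|h].
    - exists phim; split; [lra|].
      destruct (pay_gt e Lam ph f phim y h (Hnl phim ltac:(lra))) as [->|[_ Hn]]; [lra|].
      exfalso; apply Hn; auto.
    - exists L; split; [lra|]. rewrite (pay_lt_eq e Lam ph f L y); auto; try lra.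
      apply Hbl; lra. }
  assert (Hout : forall y x, L <= y <= phim -> in_I ph x -> ~ (L <= x <= phim) ->
            exists x', L <= x' <= phim /\ payoff e Lam ph f x y < payoff e Lam ph f x' y).
  { intros y x Hy Hx Hn. destruct (Hdev y Hy) as [x' [Hx' Hv]]. exists x'; split; auto.
    rewrite Hv. destruct (Rlt_le_dec x L) as [h|h].
    - assert (payoff e Lam ph f x y <= e * x) by (apply pay_lt_le; destruct Hx; lra).
      nra.
    - assert (h2 : phim < x) by lra.
      destruct (pay_gt e Lam ph f x y ltac:(lra) (Hnl x ltac:(lra))) as [->|[-> _]]; [|lra].
      rewrite HL. apply Hmax; auto; lra. }
  unfold equilibrium_cycle. split; [lra|]. split; [lra|]. split; [lra|].
  split; [exact Hout|]. split; [exact Hout|].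
  intros p1 p2 H1 H2.
  destruct (total_order_T p1 p2) as [[h|h]|h].
  - left. exists ((p1 + p2) / 2). split; [lra|].
    rewrite (pay_lt_eq e Lam ph f p1 p2 h (Hbl p2 ltac:(lra))).
    rewrite (pay_lt_eq e Lam ph f ((p1 + p2) / 2) p2 ltac:(lra) (Hbl p2 ltac:(lra))). apply Rmult_lt_compat_l; lra.
  - subst p2. left. rewrite (pay_eq e Lam ph f p1 (Hnl p1 ltac:(lra))).
    assert (Hf1 : f p1 < 2 * e / Lam).
    { apply (thr_below ph f); auto. split; lra. unfold phi_low in Eq. rewrite Eq. simpl. lra. }
    assert (Hf2 : Lam * f p1 < 2 * e).
    { apply (Rmult_lt_reg_l (/ Lam)). apply Rinv_0_lt_compat; lra.
      replace (/ Lam * (Lam * f p1)) with (f p1) by (field; lra).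
      replace (/ Lam * (2 * e)) with (2 * e / Lam) by (field; lra). lra. }
    assert (HD : Lam / 2 * f p1 * p1 < e * p1) by nra.
    destruct (Req_dec p1 L) as [->|hn].
    + exists phim. split; [lra|].
      destruct (pay_gt e Lam ph f phim L HLU (Hnl phim ltac:(lra))) as [->|[_ Hn]].
      * rewrite <- HL. lra.
      * exfalso; apply Hn; apply Hbl; lra.
    + set (D := e * p1 - Lam / 2 * f p1 * p1).
      set (t := Rmin (p1 - L) (D / e) / 2).
      assert (Ht1 : 0 < t).
      { unfold t. apply Rdiv_lt_0_compat; [|lra]. apply Rmin_glb_lt; [lra|].
        apply Rdiv_lt_0_compat; unfold D; lra. }
      assert (Ht2 : t <= (p1 - L) / 2) by (unfold t; generalize (Rmin_l (p1 - L) (D / e)); lra).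
      assert (Ht3 : e * t <= D / 2).
      { unfold t. generalize (Rmin_r (p1 - L) (D / e)). intro.
        replace (D / 2) with (e * ((D / e) / 2)) by (field; lra).
        apply Rmult_le_compat_l; lra. }
      exists (p1 - t). split; [lra|].
      rewrite (pay_lt_eq e Lam ph f (p1 - t) p1 ltac:(lra) (Hbl p1 ltac:(lra))).
      unfold D in Ht3. nra.
  - right. exists ((p1 + p2) / 2). split; [lra|].
    rewrite (pay_lt_eq e Lam ph f p2 p1 h (Hbl p1 ltac:(lra))).
    rewrite (pay_lt_eq e Lam ph f ((p1 + p2) / 2) p1 ltac:(lra) (Hbl p1 ltac:(lra))). apply Rmult_lt_compat_l; lra.
Qed.
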